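(* If a real symmetric matrix has symmetric tropical rank two, then it has tropical rank two.
   Context: For an $r\times r$ submatrix of a real matrix $A$ with row index set $I$ and column index set $J$, each bijection $\rho:I\to J$ has value $\sum_{i\in I}A_{i,\rho(i)}$; the submatrix is tropically singular if the minimum value is attained by at least two distinct bijections. For symmetric $A$, the submatrix is symmetrically tropically singular if the minimum is attained by at least two distinct monomials $\prod_{i\in I}X_{i,\rho(i)}$, where variables are subject to the identification $X_{i,j}=X_{j,i}$. The tropical rank (resp. symmetric tropical rank) of $A$ is the largest $r$ such that $A$ has an $r\times r$ submatrix (arbitrary row and column sets) that is not tropically singular (resp. not symmetrically tropically singular). *)

(* Defs.v *)
From HB Require Import structures.
From mathcomp Require Import all_boot all_order all_algebra.
From mathcomp Require Export reals.
Set Implicit Arguments. Unset Strict Implicit. Unset Printing Implicit Defensive.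
Import Order.TTheory GRing.Theory Num.Theory.
Local Open Scope ring_scope.

Section Trop.
Variables (R : realType) (m n : nat).
Implicit Types (A : 'M[R]_(m, n)) (I : {set 'I_m}) (J : {set 'I_n})
  (f g h : 'I_m -> 'I_n).

Definition is_bij I J f : Prop := {in I &, injective f} /\ f @: I = J.

Definition bij_val A I f : R := \sum_(i in I) A i (f i).

Definition is_min A I J f : Prop :=
  is_bij I J f /\ forall h, is_bij I J h -> bij_val A I f <= bij_val A I h.

Definition trop_singular A I J : Prop :=
  exists f g, [/\ is_min A I J f, is_min A I J g &
                  exists2 i, i \in I & f i != g i].

Definition is_trop_rank A (r : nat) : Prop :=
  (exists I J, [/\ #|I| = r, #|J| = r & ~ trop_singular A I J]) /\
  (forall I J, #|I| = #|J| -> (r < #|I|)%N -> trop_singular A I J).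
End Trop.

Section SymTrop.
Variables (R : realType) (n : nat).
Implicit Types (A : 'M[R]_n) (I J : {set 'I_n}) (f g : 'I_n -> 'I_n).

(* exponent of the variable X_{a,b} = X_{b,a} in prod_{i in I} X_{i, f i} *)
Definition sym_exp I f (a b : 'I_n) : nat :=
  #|[set i in I | ((i == a) && (f i == b)) || ((i == b) && (f i == a))]|.

Definition same_sym_monomial I f g : Prop :=
  forall a b, sym_exp I f a b = sym_exp I g a b.

Definition sym_trop_singular A I J : Prop :=
  exists f g, [/\ is_min A I J f, is_min A I J g & ~ same_sym_monomial I f g].

Definition is_sym_trop_rank A (r : nat) : Prop :=
  (exists I J, [/\ #|I| = r, #|J| = r & ~ sym_trop_singular A I J]) /\
  (forall I J, #|I| = #|J| -> (r < #|I|)%N -> sym_trop_singular A I J).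
End SymTrop.

(* Main.v *)
Require Import Defs.
From mathcomp Require Import all_boot all_order all_algebra.
Set Implicit Arguments. Unset Strict Implicit. Unset Printing Implicit Defensive.
Import Order.TTheory GRing.Theory Num.Theory.

Lemma sym_to_trop (R : realType) (n : nat) (A : 'M[R]_n) I J :
  sym_trop_singular A I J -> trop_singular A I J.
Proof.
case=> f [g [mf mg nsm]]; exists f, g; split=> //.
case: (boolP [exists i in I, f i != g i]) => [/exists_inP[i iI ne]|/exists_inPn H].
  by exists i.
exfalso; apply: nsm => a b; rewrite /sym_exp; apply: eq_card => i.
rewrite !inE; case iI: (i \in I) => //=.
by have /negPn/eqP -> := H i iI.
Qed.

Lemma two_other n (I : {set 'I_n}) i x y :
  #|I| = 2 -> i \in I -> x \in I -> y \in I -> x != i -> y != i -> x = y.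
Proof.
move=> c2 iI xI yI xi yi.
have : #|I :\ i| == 1 by move: c2; rewrite (cardsD1 i I) iI add1n => -[->].
case/cards1P=> z Hz.
have : x \in I :\ i by rewrite !inE xi xI.
have : y \in I :\ i by rewrite !inE yi yI.
by rewrite Hz !inE => /eqP -> /eqP ->.
Qed.

Lemma half n (I : {set 'I_n}) f g i :
  same_sym_monomial I f g -> i \in I -> f i != g i -> f i \in I /\ f i != i.
Proof.
move=> H iI ne.
have : (0 < sym_exp I f i (f i))%N.
  by rewrite card_gt0; apply/set0Pn; exists i; rewrite !inE iI !eqxx.
rewrite H card_gt0 => /set0Pn[k]; rewrite !inE => /andP[kI /orP[/andP[/eqP ki /eqP gk]|/andP[/eqP kf /eqP gk]]].
  by subst k; rewrite gk eqxx in ne.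
subst k; split=> //; apply/negP => /eqP fi.
by move: ne; rewrite fi in gk *; rewrite gk eqxx.
Qed.

Lemma two_eq n (I : {set 'I_n}) f g :
  #|I| = 2 -> same_sym_monomial I f g -> forall i, i \in I -> f i = g i.
Proof.
move=> c2 H i iI; apply/eqP/negPn/negP => ne.
have [fI fi] := half H iI ne.
have H' : same_sym_monomial I g f by move=> a b; rewrite H.
have [gI gi] := half H' iI (ltac:(by rewrite eq_sym)).
by move: ne; rewrite (two_other c2 iI fI gI fi gi) eqxx.
Qed.

Theorem corollary1 (R : realType) (n : nat) (A : 'M[R]_n) :
  (A^T)%R = A -> is_sym_trop_rank A 2 -> is_trop_rank A 2.
Proof.
move=> _ [[I [J [cI cJ ns]]] big]; split; last first.
  by move=> I' J' c lt; apply: sym_to_trop; apply: big.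
exists I, J; split=> // -[f [g [mf mg [i iI ne]]]].
apply: ns; exists f, g; split=> // sm.
by move: ne; rewrite (two_eq cI sm iI) eqxx.
Qed.
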